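(* Let $m\neq\pm1$ be a square-free integer, $p$ a prime, $k$ a positive integer, $\alpha$ a root of $X^{p^k}-m$, $M=\mathbb{Q}(\alpha)$, $r$ the remainder of $m$ modulo $p^{k+1}$, $s:=v_p(m^p-m)-1$, and for $t\in\mathbb{N}$ let $h^{(r)}_t(X)=\frac{X^{p^k}-r^{p^t}}{X^{p^{k-t}}-r}=\sum_{i=0}^{p^t-1} r^{i}X^{p^k-(i+1)p^{k-t}}\in\mathbb{Z}[X]$. Suppose $k\leq s$. Then the following $p^k$ elements of $M$ are algebraic integers and are linearly independent over $\mathbb{Q}$: $$\alpha^j\cdot\frac{h^{(r)}_t(\alpha)}{p^t}\quad\text{for } 0\leq t\leq k-1,\ 0\leq j\leq p^{k-t}-p^{k-t-1}-1,$$ together with $$\frac{h^{(r)}_k(\alpha)}{p^k}.$$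
   Context: $v_p$ denotes the $p$-adic valuation on $\mathbb{Q}$. *)

(* Defs.v *)
From mathcomp Require Import all_boot all_order all_algebra all_field.
Set Implicit Arguments. Unset Strict Implicit. Unset Printing Implicit Defensive.
Import Order.TTheory GRing.Theory Num.Theory.
Local Open Scope ring_scope.

Definition squarefree_int (m : int) : Prop :=
  m != 0 /\ forall q : nat, prime q -> ~~ (q ^ 2 %| `|m|)%N.

Definition vp_int (p : nat) (z : int) : nat := logn p `|z|.

Definition hpoly (r : int) (p k t : nat) : {poly int} :=
  \sum_(i < p ^ t) r ^+ i *: 'X^(p ^ k - i.+1 * p ^ (k - t)).

Definition evalZ (P : {poly int}) (x : algC) : algC :=
  (map_poly (fun z : int => z%:~R) P).[x].

Definition cor_family (r : int) (p k : nat) (a : algC) : seq algC :=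
  flatten [seq [seq a ^+ j * (evalZ (hpoly r p k t) a / (p ^ t)%:R)
               | j <- iota 0 (p ^ (k - t) - p ^ (k - t - 1))]
          | t <- iota 0 k]
  ++ [:: evalZ (hpoly r p k k) a / (p ^ k)%:R].

Definition Qlin_indep (s : seq algC) : Prop :=
  forall c : 'I_(size s) -> rat,
    \sum_(i < size s) ratr (c i) * s`_i = 0 -> forall i, c i = 0.

(* Main.v *)
Require Import Defs.
From mathcomp Require Import all_boot all_order all_algebra all_field.
From mathcomp Require Import zify ring.
Set Implicit Arguments. Unset Strict Implicit. Unset Printing Implicit Defensive.
Import Order.TTheory GRing.Theory Num.Theory.
Local Open Scope ring_scope.

Lemma binom_div (p t j : nat) : prime p -> (j < p ^ t)%N ->
  (p ^ t %| 'C(p ^ t, j) * p ^ (p ^ t - 1 - j))%N.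
Proof.
move=> pp jlt; have p1 := prime_gt1 pp.
case: j jlt => [|j] jlt.
  rewrite bin0 mul1n; apply: dvdn_exp2l.
  have := ltn_expl t p1; lia.
set n := (p ^ t)%N in jlt *.
have H1 : (n %| j.+1 * 'C(n, j.+1))%N.
  by rewrite -mul_bin_diag dvdn_mulr.
have [j' cj' Ej] := pfactor_coprime pp (ltn0Sn j).
set e := logn p j.+1 in Ej.
have cnj : coprime n j' by rewrite /n coprimeXl.
have H2 : (n %| p ^ e * 'C(n, j.+1))%N.
  by rewrite -(Gauss_dvdr _ cnj) mulnA -Ej.
have pej : (p ^ e %| j.+1)%N by rewrite Ej dvdn_mull.
have pelt : (e < t)%N.
  rewrite -(ltn_exp2l _ _ p1); apply: leq_ltn_trans jlt.
  exact: dvdn_leq.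
have pen : (p ^ e %| n)%N by apply: dvdn_exp2l; lia.
have pesub : (p ^ e %| n - j.+1)%N by apply: dvdn_sub.
have pele : (p ^ e <= n - j.+1)%N by apply: dvdn_leq => //; lia.
have := ltn_expl e p1 => elt.
apply: (dvdn_trans H2); rewrite mulnC; apply: dvdn_mul => //; apply: dvdn_exp2l; lia.
Qed.


Lemma PoszX' (p e : nat) : ((p ^ e)%N : int) = (p : int) ^+ e.
Proof. by rewrite -[LHS]natz natrX natz. Qed.

Lemma aint_core (p t : nat) (gam x : algC) (r D1 : int) :
  prime p -> gam != 0 ->
  gam * x = (p%:Z * D1)%:~R ->
  (gam + r%:~R) ^+ (p ^ t) - r%:~R ^+ (p ^ t) = (p ^ t)%:R * (p%:Z * D1)%:~R ->
  x \in Aint.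
Proof.
move=> pp gnz Egx Ebin.
set n := (p ^ t)%N in Ebin *.
set D := p%:Z * D1 in Egx Ebin.
have n0 : (0 < n)%N by rewrite /n expn_gt0 prime_gt0.
pose A (j : nat) : int := ((('C(n, j) * p ^ (n - 1 - j)) %/ n)%N)%:Z * r ^+ j * D1 ^+ (n - 1 - j).
have keyA : forall j, (j < n)%N -> n%:Z * A j = 'C(n, j)%:Z * r ^+ j * D ^+ (n - 1 - j).
  move=> j jn; rewrite /A !mulrA.
  have -> : (n%:Z * ((('C(n, j) * p ^ (n - 1 - j)) %/ n)%N)%:Z) = ('C(n, j) * p ^ (n - 1 - j))%N%:Z.
    by rewrite -PoszM mulnC divnK //; exact: binom_div.
  rewrite /D exprMn PoszM PoszX'; ring.
clearbody D A.
  pose Q : {poly algC} := 'X^n - \poly_(j < n) (A j)%:~R.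
have szP : (size (\poly_(j < n) (A j)%:~R : {poly algC}) < size ('X^n : {poly algC}))%N.
  by rewrite size_polyXn ltnS size_poly.
apply: (@root_monic_Aint Q).
- rewrite /root /Q hornerD hornerN horner_poly hornerXn subr_eq0; apply/eqP.
  have nz : (n%:R * gam ^+ n : algC) != 0.
    by rewrite mulf_eq0 negb_or pnatr_eq0 -lt0n n0 expf_eq0 negb_and gnz orbT.
  apply: (mulfI nz).
  rewrite -mulrA -exprMn Egx mulr_sumr.
  have E1 : forall j : 'I_n, n%:R * gam ^+ n * ((A j)%:~R * x ^+ j) =
      D%:~R ^+ (n - 1) * (gam ^+ (n - j) * r%:~R ^+ j *+ 'C(n, j)).
    move=> [j jn] /=.
    have -> : gam ^+ n = gam ^+ (n - j) * gam ^+ j by rewrite -exprD subnK // ltnW.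
    have E2 : (n%:R : algC) * (A j)%:~R = ('C(n, j)%:Z * r ^+ j * D ^+ (n - 1 - j))%:~R.
      by rewrite -keyA // intrM.
    transitivity ((n%:R * (A j)%:~R) * (gam * x) ^+ j * gam ^+ (n - j)).
      rewrite exprMn; ring.
    rewrite E2 Egx -[in RHS](@subnK j (n - 1)); last lia.
    rewrite exprD !intrM !rmorphXn /= -mulr_natl -natz rmorph_nat; ring.
  rewrite (eq_bigr _ (fun j _ => E1 j)) -mulr_sumr.
  have := Ebin; rewrite exprDn big_ord_recr /= subnn expr0 mul1r binn mulr1n addrK => ->.
  have -> : (D%:~R : algC) ^+ n = D%:~R ^+ (n - 1) * D%:~R by rewrite -exprSr subn1 prednK.
  ring.
- by rewrite /Q monicE lead_coefDl ?size_polyN // lead_coefXn.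
- apply/polyOverP => i; rewrite /Q coefB coefXn coef_poly.
  by apply: rpredB; [case: eqP => _ | case: ifP => _]; rewrite ?rpred0 ?rpred1 ?intr_int.
Qed.


Lemma alpha_Aint (m : int) (N : nat) (alpha : algC) :
  (0 < N)%N -> alpha ^+ N = m%:~R -> alpha \in Aint.
Proof.
move=> N0 Ea; apply: (@root_monic_Aint ('X^N - (m%:~R)%:P)).
- by rewrite /root hornerD hornerN hornerXn hornerC Ea subrr.
- exact: monicXnsubC.
- by rewrite polyOverXnsubC intr_int.
Qed.

Lemma sqf_logn (m : int) : squarefree_int m -> m != 1 -> m != -1 ->
  exists q, prime q /\ logn q `|m|%N = 1%N.
Proof.
move=> [m0 sq] m1 m2.
have gt1 : (1 < `|m|)%N.
  case: m m0 m1 m2 {sq} => [[|[|n]]|[|n]] //.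
exists (pdiv `|m|); have pq := pdiv_prime gt1; split=> //.
have m0' : (0 < `|m|)%N by lia.
have h1 : (1 <= logn (pdiv `|m|) `|m|)%N.
  by rewrite -pfactor_dvdn // expn1 pdiv_dvd.
have h2 : ~~ (2 <= logn (pdiv `|m|) `|m|)%N.
  by rewrite -pfactor_dvdn //; apply: sq.
lia.
Qed.

Lemma prod_const_seq (T : Type) (R : comNzRingType) (rs : seq T) (x : R) :
  \prod_(z <- rs) x = x ^+ size rs.
Proof. by elim: rs => [|a rs IH]; rewrite ?big_nil ?big_cons ?IH ?exprS. Qed.

Lemma minpoly_big (m : int) (N : nat) (alpha : algC) :
  squarefree_int m -> m != 1 -> m != -1 -> (0 < N)%N -> alpha ^+ N = m%:~R ->
  forall g : {poly rat}, g != 0 -> root (map_poly ratr g) alpha -> (N < size g)%N.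
Proof.
move=> sqm m1 m2 N0 Ea g gnz rg.
have [g0 [Dg mon] dv] := minCpolyP alpha.
have g0g : (g0 %| g) by rewrite -dv.
suff : size g0 = N.+1 by move=> <-; apply: dvdp_leq.
pose q : {poly rat} := 'X^N - (m%:~R)%:P.
have Eq : map_poly ratr q = 'X^N - (m%:~R)%:P :> {poly algC}.
  by rewrite /q rmorphB /= map_polyXn map_polyC /= rmorph_int.
have g0q : g0 %| q by rewrite -dv Eq /root hornerD hornerN hornerXn hornerC Ea subrr.
have szq : size q = N.+1 by rewrite size_XnsubC.
have le1 : (size g0 <= N.+1)%N by rewrite -szq; apply: dvdp_leq => //; rewrite -size_poly_eq0 szq.
have gt1 : (1 < size g0)%N by have := size_minCpoly alpha; rewrite Dg (@size_map_poly _ _ ratr).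
have Aa := alpha_Aint N0 Ea.
have /polyOverP Gint : minCpoly alpha \is a polyOver Num.int by [].
set G := minCpoly alpha in Gint Dg.
have [rs Grs] := closed_field_poly_normal G.
have monG : G \is monic by rewrite Dg map_monic.
rewrite (monicP monG) scale1r in Grs.
have szrs : size g0 = (size rs).+1.
  by have := @size_map_poly _ algC ratr g0; rewrite -Dg Grs size_prod_XsubC => <-.
have rootz : forall z, z \in rs -> z ^+ N = m%:~R.
  move=> z zrs; have : root G z by rewrite Grs root_prod_XsubC.
  have Gq : G %| 'X^N - (m%:~R)%:P by rewrite Dg -Eq dvdp_map.
  move/(root_dvdp Gq); rewrite /root hornerD hornerN hornerXn hornerC subr_eq0.
  by move/eqP.
have [c Ec] : exists c : int, G`_0 = c%:~R by apply/intrP.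
have E0 : `|c%:~R : algC| ^+ N = `|m%:~R : algC| ^+ (size rs).
  rewrite -Ec -horner_coef0 Grs horner_prod normr_prod -prodrXl.
  rewrite (@eq_big_seq _ _ _ _ _ _ (fun _ => `|m%:~R : algC|)).
    by rewrite prod_const_seq.
  by move=> z zrs; rewrite hornerD hornerN hornerX hornerC sub0r normrN -normrX rootz.
have E1 : (`|c| ^ N)%N = (`|m| ^ (size rs))%N.
  rewrite -!abszX; apply/eqP; rewrite -eqz_nat !abszE; apply/eqP.
  apply: (@intr_inj algC); rewrite !intr_norm !rmorphXn /=.
  by rewrite !normrX.
have [qq [pq lq]] := sqf_logn sqm m1 m2.
have := congr1 (logn qq) E1; rewrite !lognX lq muln1 => E2.
move: E2; case: (logn qq `|c|) => [|x]; first lia.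
move=> E2; have : (N <= N * x.+1)%N by rewrite leq_pmulr.
lia.
Qed.


Lemma indep_poly (n : nat) (c : 'I_n -> rat) (P : 'I_n -> {poly rat}) :
  injective (fun i => size (P i)) -> (forall i, P i != 0) ->
  \sum_i c i *: P i = 0 -> forall i, c i = 0.
Proof.
move=> inj nz E i0; apply/eqP; apply/negPn/negP => ci0.
have [i1 ci1 maxi1] := @arg_maxnP _ i0 (fun i => c i != 0) (fun i => size (P i)) ci0.
have := congr1 (fun q : {poly rat} => q`_(size (P i1)).-1) E.
rewrite coef_sum coef0 (bigD1 i1) //= big1 ?addr0 => [|j ji].
  rewrite coefZ => /eqP; rewrite mulf_eq0 (negbTE ci1) /=.
  by rewrite -lead_coefE lead_coef_eq0 (negbTE (nz i1)).
rewrite coefZ; case: (eqVneq (c j) 0) => [->|cj]; first by rewrite mul0r.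
have /= le := maxi1 j cj.
have ne : size (P j) != size (P i1) by apply/eqP => /inj /eqP; rewrite (negbTE ji).
rewrite nth_default ?mulr0 //.
have s0 : (0 < size (P i1))%N by rewrite size_poly_gt0.
by rewrite -ltnS prednK // ltn_neqAle ne le.
Qed.


Lemma pk_split (p k t : nat) : (t <= k)%N -> (p ^ k = p ^ t * p ^ (k - t))%N.
Proof. by move=> tk; rewrite -expnD subnKC. Qed.

Lemma size_hpoly (r : int) (p k t : nat) : prime p -> (t <= k)%N ->
  size (hpoly r p k t) = (p ^ k - p ^ (k - t)).+1.
Proof.
move=> pp tk; have Nq := pk_split p tk.
set q := (p ^ (k - t))%N in Nq *.
have q0 : (0 < q)%N by rewrite expn_gt0 prime_gt0.
have [u Hu] : exists u, (p ^ t)%N = u.+1.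
  by exists (p ^ t).-1; rewrite prednK // expn_gt0 prime_gt0.
rewrite Hu in Nq.
rewrite /hpoly Hu big_ord_recl /= expr0 scale1r mul1n.
rewrite size_polyDl size_polyXn //.
apply: leq_ltn_trans (size_sum _ _ _) _; rewrite ltnS.
apply/bigmax_leqP => i _; apply: leq_trans (size_scale_leq _ _) _.
rewrite size_polyXn /bump /= add1n -/q.
have h1 : (2 * q <= i.+2 * q)%N by rewrite leq_mul2r; apply/orP; right.
have h2 : (i.+2 * q <= u.+1 * q)%N by rewrite leq_mul2r; apply/orP; right; rewrite ltnS ltn_ord.
lia.
Qed.

Lemma eval_hpoly (r : int) (p k t : nat) (alpha : algC) : (t <= k)%N ->
  evalZ (hpoly r p k t) alpha =
  \sum_(i < p ^ t) (alpha ^+ (p ^ (k - t))) ^+ ((p ^ t).-1 - i) * r%:~R ^+ i.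
Proof.
move=> tk; have Nq := pk_split p tk.
rewrite /evalZ /hpoly raddf_sum horner_sum; apply: eq_bigr => i _.
change ((map_poly (fun z : int => z%:~R : algC) (r ^+ i *: 'X^(p ^ k - i.+1 * p ^ (k - t)))).[alpha] = alpha ^+ (p ^ (k - t)) ^+ ((p ^ t).-1 - i) * r%:~R ^+ i).
rewrite map_polyZ map_polyXn hornerZ hornerXn rmorphXn /= mulrC -exprM.
congr (_ * _); congr (_ ^+ _); rewrite Nq [in RHS]mulnC -mulnBl; congr (_ * _).
have := ltn_ord i; lia.
Qed.


Lemma cong_lemma (m : int) (p k t : nat) : prime p ->
  (k.+1 <= logn p `|m ^+ p - m|)%N ->
  exists w : int, m - (m %% (p ^ k.+1)%:Z)%Z ^+ (p ^ t) = w * (p ^ k.+1)%:Z.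
Proof.
move=> pp hv.
set M : int := (p ^ k.+1)%:Z.
have nz : (0 < `|m ^+ p - m|)%N.
  by case: (posnP `|m ^+ p - m|) hv => // ->; rewrite logn0.
have dM : (M %| m ^+ p - m)%Z.
  by rewrite /dvdz /M unfold_in; change (p ^ k.+1 %| `|m ^+ p - m|)%N; rewrite pfactor_dvdn.
have Hp : (m ^+ p == m %[mod M])%Z by rewrite eqz_mod_dvd.
have Ht : forall t, (m ^+ (p ^ t) == m %[mod M])%Z.
  elim=> [|u IH]; first by rewrite expn0 expr1.
  rewrite expnSr exprM; apply/eqP.
  rewrite -modzXm (eqP IH) modzXm; exact/eqP.
apply/dvdzP; rewrite -eqz_mod_dvd eq_sym; apply/eqP.
rewrite -modzXm modz_mod modzXm; exact/eqP.
Qed.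


Lemma hfrac_Aint (m : int) (p k t : nat) (alpha : algC) :
  squarefree_int m -> m != 1 -> m != -1 -> prime p -> (0 < k)%N ->
  alpha ^+ (p ^ k) = m%:~R -> (k.+1 <= logn p `|m ^+ p - m|)%N -> (t <= k)%N ->
  evalZ (hpoly (m %% (p ^ k.+1)%:Z)%Z p k t) alpha / (p ^ t)%:R \in Aint.
Proof.
move=> sqm m1 m2 pp k0 Ea hv tk.
set r := (m %% (p ^ k.+1)%:Z)%Z.
have p1 := prime_gt1 pp.
case: (posnP t) => [t0 | tpos].
  rewrite t0 eval_hpoly // expn0 big_ord1 /= !expr0 mulr1 divr1; exact: rpred1.
have [w Hw] := cong_lemma t pp hv; rewrite -/r in Hw.
set n := (p ^ t)%N in Hw *.
set beta := alpha ^+ (p ^ (k - t)).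
have bn : beta ^+ n = m%:~R by rewrite -exprM mulnC -pk_split.
have Eh : (beta - r%:~R) * evalZ (hpoly r p k t) alpha = m%:~R - r%:~R ^+ n.
  by rewrite eval_hpoly // -subrXX bn.
set D1 : int := w * (p ^ (k - t))%:Z.
have keyZ : m - r ^+ n = n%:Z * (p%:Z * D1).
  rewrite Hw /D1 /n !PoszX'.
  have -> : k.+1 = (t + (k - t).+1)%N by lia.
  by rewrite exprD exprS; ring.
have key : (m%:~R - r%:~R ^+ n : algC) = n%:R * (p%:Z * D1)%:~R.
  by rewrite -rmorphXn -rmorphB /= keyZ intrM -natz rmorph_nat.
have n0 : (n%:R : algC) != 0 by rewrite pnatr_eq0 -lt0n expn_gt0 prime_gt0.
apply: (@aint_core p t (beta - r%:~R) _ r D1 pp).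
- apply/eqP => eb.
  have : (p ^ k < size (('X^(p ^ (k - t)) - ((r%:~R : rat))%:P)%R : {poly rat}))%N.
    apply: (minpoly_big sqm m1 m2 _ Ea).
    + by rewrite expn_gt0 prime_gt0.
    + by rewrite -size_poly_eq0 size_XnsubC // expn_gt0 prime_gt0.
    rewrite /root rmorphB /= map_polyXn map_polyC /= rmorph_int hornerD hornerN hornerXn hornerC.
    by rewrite -/beta; move/eqP: eb; rewrite subr_eq0 => /eqP ->.
  rewrite size_XnsubC ?expn_gt0 ?prime_gt0 // ltnS leqNgt ltn_exp2l //; lia.
- by rewrite mulrA Eh key mulrC mulrA mulVf // mul1r.
- by rewrite subrK bn key.
Qed.


Definition hQ (r : int) (p k t : nat) : {poly rat} :=
  ((p ^ t)%:R)^-1 *: map_poly (fun z : int => z%:~R) (hpoly r p k t).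

Definition Pfam (r : int) (p k : nat) : seq {poly rat} :=
  flatten [seq [seq 'X^j * hQ r p k t | j <- iota 0 (p ^ (k - t) - p ^ (k - t - 1))]
          | t <- iota 0 k] ++ [:: hQ r p k k].

Definition evA (alpha : algC) (P : {poly rat}) : algC := (map_poly ratr P).[alpha].

Lemma evA_hQ r p k t j alpha :
  evA alpha ('X^j * hQ r p k t) = alpha ^+ j * (evalZ (hpoly r p k t) alpha / (p ^ t)%:R).
Proof.
rewrite /evA /hQ rmorphM /= map_polyXn map_polyZ /= -map_poly_comp hornerM hornerXn hornerZ.
rewrite fmorphV rmorph_nat /evalZ (eq_map_poly (g := fun z : int => z%:~R)); last first.
  by move=> z /=; rewrite rmorph_int.
by rewrite [_^-1 * _]mulrC.
Qed.

Lemma cor_eq r p k alpha : cor_family r p k alpha = map (evA alpha) (Pfam r p k).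
Proof.
rewrite /cor_family /Pfam map_cat map_flatten -map_comp; congr (_ ++ _).
  congr flatten; apply: eq_map => t /=; rewrite -map_comp; apply: eq_map => j /=.
  by rewrite evA_hQ.
by rewrite /= -[hQ r p k k]mul1r -(expr0 'X) evA_hQ expr0 mul1r.
Qed.

Lemma size_XhQ r p k t j : prime p -> (t <= k)%N ->
  size ('X^j * hQ r p k t) = (p ^ k - p ^ (k - t) + j).+1.
Proof.
move=> pp tk.
have szh : size (hQ r p k t) = (p ^ k - p ^ (k - t)).+1.
  rewrite /hQ size_scale; last by rewrite invr_eq0 pnatr_eq0 -lt0n expn_gt0 prime_gt0.
  by rewrite size_map_inj_poly ?size_hpoly //; apply: intr_inj.
rewrite mulrC size_mulXn ?szh; first lia.
by rewrite -size_poly_eq0 szh.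
Qed.

Lemma blocks (p k N a b : nat) : prime p -> (a + b <= k)%N -> N = (p ^ k)%N ->
  flatten [seq iota (N - p ^ (k - t)).+1 (p ^ (k - t) - p ^ (k - t - 1)) | t <- iota a b] =
  iota (N - p ^ (k - a)).+1 (p ^ (k - a) - p ^ (k - a - b)).
Proof.
move=> pp; have p0 : (0 < p)%N by rewrite prime_gt0.
elim: b a => [|b IH] a abk EN; first by rewrite /= subn0 subnn.
rewrite /= IH; [|lia|done].
have E1 : (k - a.+1 = k - a - 1)%N by lia.
have E2 : (k - a - 1 - b = k - a - b.+1)%N by lia.
rewrite E1 E2.
have h1 : (p ^ (k - a - b.+1) <= p ^ (k - a - 1))%N by apply: leq_pexp2l; lia.
have h2 : (p ^ (k - a - 1) <= p ^ (k - a))%N by apply: leq_pexp2l; lia.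
have h3 : (p ^ (k - a) <= N)%N by rewrite EN; apply: leq_pexp2l; lia.
have e1 : ((N - p ^ (k - a - 1)).+1 = (N - p ^ (k - a)).+1 + (p ^ (k - a) - p ^ (k - a - 1)))%N by lia.
have e2 : (p ^ (k - a) - p ^ (k - a - b.+1) = (p ^ (k - a) - p ^ (k - a - 1)) + (p ^ (k - a - 1) - p ^ (k - a - b.+1)))%N by lia.
by rewrite e1 e2 iotaD.
Qed.

Lemma size_Pfam r p k : prime p -> map (fun P : {poly rat} => size P) (Pfam r p k) = iota 1 (p ^ k).
Proof.
move=> pp; set N := (p ^ k)%N.
have N0 : (0 < N)%N by rewrite expn_gt0 prime_gt0.
rewrite /Pfam map_cat map_flatten -map_comp /=.
rewrite (_ : map _ (iota 0 k) = map (fun t => iota (N - p ^ (k - t)).+1 (p ^ (k - t) - p ^ (k - t - 1))) (iota 0 k)); last first.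
  apply/eq_in_map => t; rewrite mem_iota add0n => /andP [_ tk] /=.
  rewrite -map_comp -[(N - p ^ (k - t)).+1]addn0 iotaDl; apply: eq_map => j /=.
  by rewrite size_XhQ // ?(ltnW tk) // -/N; lia.
rewrite (@blocks p k N 0 k) // ?add0n // subn0 subnn expn0.
have := @size_XhQ r p k k 0 pp (leqnn k); rewrite expr0 mul1r subnn expn0 addn0 => ->.
rewrite -/N.
have -> : (N - N).+1 = 1%N by lia.
have -> : iota 1 N = iota 1 ((N - 1) + 1) by congr iota; lia.
rewrite iotaD /=; congr (_ ++ [:: _]); lia.
Qed.

Lemma indep_main (m : int) (p k : nat) (alpha : algC) (r : int) :
  squarefree_int m -> m != 1 -> m != -1 -> prime p -> (0 < k)%N ->
  alpha ^+ (p ^ k) = m%:~R -> Qlin_indep (map (evA alpha) (Pfam r p k)).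
Proof.
move=> sqm m1 m2 pp k0 Ea c Hc.
set Ps := Pfam r p k in c Hc *.
set N := (p ^ k)%N in Ea.
have N0 : (0 < N)%N by rewrite expn_gt0 prime_gt0.
have Hsz := size_Pfam r k pp; rewrite -/Ps -/N in Hsz.
have szPs : size Ps = N by rewrite -(size_map (fun P : {poly rat} => size P)) Hsz size_iota.
have szi : forall i : 'I_(size (map (evA alpha) Ps)), size Ps`_i = i.+1.
  move=> i; have ilt : (i < N)%N by rewrite -szPs -(size_map (evA alpha)).
  have := congr1 (fun s => nth 0%N s i) Hsz.
  by rewrite /= (nth_map 0) ?nth_iota ?szPs // add1n.
apply: (@indep_poly _ c (fun i => Ps`_i)).
- by move=> i j /=; rewrite !szi => -[] /ord_inj.
- by move=> i; rewrite -size_poly_eq0 szi.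
set F := \sum_i c i *: Ps`_i.
apply/eqP; apply/negPn/negP => Fnz.
have : (N < size F)%N.
  apply: (minpoly_big sqm m1 m2 N0 Ea Fnz).
  rewrite /root /F raddf_sum horner_sum; apply/eqP; rewrite -[RHS]Hc; apply: eq_bigr => i _.
  rewrite (nth_map 0) -?(size_map (evA alpha)) // /evA.
  change ((map_poly (ratr : rat -> algC) (c i *: Ps`_i)).[alpha] = ratr (c i) * (map_poly ratr Ps`_i).[alpha]).
  by rewrite map_polyZ hornerZ.
have : (size F <= N)%N.
  apply: leq_trans (size_sum _ _ _) _; apply/bigmax_leqP => i _.
  apply: leq_trans (size_scale_leq _ _) _; rewrite szi.
  by apply: leq_trans (ltn_ord i) _; rewrite size_map szPs.
lia.
Qed.

Theorem corollary3p3 (m : int) (p k : nat) (alpha : algC) :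
  squarefree_int m -> m != 1 -> m != -1 ->
  prime p -> (0 < k)%N ->
  alpha ^+ (p ^ k) = m%:~R ->
  let r : int := (m %% (p ^ k.+1)%:Z)%Z in
  let s : int := (vp_int p (m ^+ p - m))%:Z - 1 in
  k%:Z <= s ->
  size (cor_family r p k alpha) = (p ^ k)%N /\
  {in cor_family r p k alpha, forall x, x \in Aint} /\
  Qlin_indep (cor_family r p k alpha).
Proof.
move=> sqm m1 m2 pp k0 Ea r s hs.
have hv : (k.+1 <= logn p `|m ^+ p - m|)%N.
  move: hs; rewrite /s /vp_int; move: (logn _ _) => L; lia.
have N0 : (0 < p ^ k)%N by rewrite expn_gt0 prime_gt0.
split; [|split].
- by rewrite cor_eq size_map -(size_map (fun P : {poly rat} => size P)) size_Pfam // size_iota.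
- move=> x; rewrite /cor_family mem_cat => /orP [].
    move=> /flattenP [s0 /mapP [t tin ->] /mapP [j _ ->]].
    rewrite mem_iota add0n in tin.
    apply: rpredM; first by apply: rpredX; exact: alpha_Aint Ea.
    by apply: hfrac_Aint => //; exact: ltnW.
  by rewrite inE => /eqP ->; apply: hfrac_Aint.
- rewrite cor_eq; have H := (@indep_main m p k alpha r sqm m1 m2 pp k0 Ea); exact H.
Qed.
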